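(* Let $A$ be a finite alphabet, let $x_1x_2x_3\dots$ be an infinite sequence of letters of $A$, let $m\ge 1$, and let $\varphi_1,\dots,\varphi_m$ be data compressors, i.e. maps from finite words over $A$ to finite binary words. Assume that for every $i=1,\dots,m$ the limit $$\lambda_i=\lim_{n\to\infty}\frac{|\varphi_i(x_1x_2\dots x_n)|}{n}$$ exists. Fix $\delta>0$ and let $\Phi_1^\delta$ be the following method: given $x_1\dots x_n$, put $r=\lfloor \delta T/v\rfloor=\lfloor \delta n\rfloor$ (where $v>0$ is an upper bound on the per-letter encoding time of all $\varphi_i$ and $T=nv$), compute $|\varphi_1(x_1\dots x_r)|,\dots,|\varphi_m(x_1\dots x_r)|$, choose an index $s=s(n)\in\{1,\dots,m\}$ with $|\varphi_s(x_1\dots x_r)|=\min_{1\le i\le m}|\varphi_i(x_1\dots x_r)|$, and output the codeword $\langle s\rangle\,\varphi_s(x_1\dots x_n)$, where $\langle s\rangle$ is a $\lceil\log_2 m\rceil$-bit binary representation of $s$. Thus $|\Phi_1^\delta(x_1\dots x_n)|=\lceil\log_2 m\rceil+|\varphi_{s(n)}(x_1\dots x_n)|$. Then $$\lim_{n\to\infty}\frac{|\Phi_1^\delta(x_1x_2\dots x_n)|}{n}=\min_{i=1,\dots,m}\lim_{n\to\infty}\frac{|\varphi_i(x_1x_2\dots x_n)|}{n},$$ i.e. $\Phi_1^\delta$ is time-universal.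
   Context: $|w|$ denotes the length of a binary word $w$. A compressing method is called time-universal if the limit of its per-letter codeword length equals the infimum over the given compressors of their limiting per-letter codeword lengths. The prefix $x_1\dots x_r$ refers to the given infinite sequence (for $r=0$ it is the empty word). *)

(* Defs.v *)
From HB Require Import structures.
From mathcomp Require Import all_boot all_order all_algebra.
From mathcomp Require Import all_classical all_reals all_analysis.
Set Implicit Arguments. Unset Strict Implicit. Unset Printing Implicit Defensive.
Import Order.TTheory GRing.Theory Num.Theory.
Local Open Scope ring_scope.

(* prefix x_1 ... x_n of the infinite sequence x (x 0 is the first letter) *)
Definition wprefix (A : Type) (x : nat -> A) (n : nat) : seq A :=
  [seq x i | i <- iota 0 n].

Definition bits (w k : nat) : seq bool := mkseq (fun i => odd (k %/ 2 ^ i)) w.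

Definition idx_width (m : nat) : nat := up_log 2 m.

Definition look_len (R : realType) (delta : R) (n : nat) : nat :=
  Num.truncn (delta * n%:R).

Definition admissible_choice (R : realType) (A : Type) (m : nat)
  (phi : 'I_m -> seq A -> seq bool) (x : nat -> A) (delta : R)
  (s : nat -> 'I_m) : Prop :=
  forall n (i : 'I_m),
    (size (phi (s n) (wprefix x (look_len delta n)))
       <= size (phi i (wprefix x (look_len delta n))))%N.

Definition Phi1 (A : Type) (m : nat) (phi : 'I_m -> seq A -> seq bool)
  (x : nat -> A) (s : nat -> 'I_m) (n : nat) : seq bool :=
  bits (idx_width m) (s n) ++ phi (s n) (wprefix x n).

Definition fmin (R : realType) (m : nat) (hm : (0 < m)%N) (lam : 'I_m -> R) : R :=
  \big[Order.min/lam (Ordinal hm)]_(i < m) lam i.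

(* Main.v *)
Require Import Defs.
From mathcomp Require Import all_boot all_order all_algebra.
From mathcomp Require Import all_classical all_reals all_analysis.
From mathcomp Require Import lra.
Import Order.TTheory GRing.Theory Num.Theory numFieldNormedType.Exports.
Local Open Scope classical_set_scope.
Local Open Scope ring_scope.

Theorem claim1 (R : realType) (A : finType) (x : nat -> A) (m : nat)
  (hm : (0 < m)%N) (phi : 'I_m -> seq A -> seq bool) (lam : 'I_m -> R)
  (hlam : forall i : 'I_m,
     (fun n : nat => (size (phi i (wprefix x n)))%:R / n%:R : R) @ \oo --> lam i)
  (delta : R) (hdelta : 0 < delta) (s : nat -> 'I_m)
  (hs : admissible_choice phi x delta s) :
  (fun n : nat => (size (Phi1 phi x s n))%:R / n%:R : R) @ \oo --> fmin hm lam.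
Proof.
set L := fmin hm lam.
have Lle : forall i, L <= lam i by move=> i; exact: bigmin_le.
have [j0 Lj0] : exists j, L = lam j.
  rewrite /L /fmin; apply: (big_ind (fun y => exists j, y = lam j)).
  - by exists (Ordinal hm).
  - move=> a b [ja ->] [jb ->]; case: (leP (lam ja) (lam jb)) => h.
      by exists ja.
    by exists jb.
  - by move=> i _; exists i.
set g := fun i (n : nat) => (size (phi i (wprefix x n)))%:R / n%:R : R.
have E : forall i e, 0 < e -> \forall n \near \oo, `|lam i - g i n| < e.
  by move=> i e e0; move/cvgrPdist_lt: (hlam i); apply.
have ev1 : \forall r \near \oo, forall i, lam i != L ->
    (size (phi j0 (wprefix x r)) < size (phi i (wprefix x r)))%N.
  apply: filter_forall => i.
  case: (eqVneq (lam i) L) => [eqi|ne]; first by apply: nearW.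
  have lt : L < lam i by rewrite lt_neqAle eq_sym ne Lle.
  have e0 : 0 < (lam i - L) / 2 by rewrite divr_gt0 // subr_gt0.
  near=> r => _.
  have h1 : `|lam i - g i r| < (lam i - L) / 2 by near: r; exact: E.
  have h2 : `|lam j0 - g j0 r| < (lam i - L) / 2 by near: r; exact: E.
  have r0 : (0 < r)%N by near: r; exact: nbhs_infty_gt.
  have : g j0 r < g i r.
    move: h1 h2; rewrite !ltr_norml -Lj0 => /andP[h1 h1'] /andP[h2 h2']; lra.
  by rewrite /g ltr_pM2r ?invr_gt0 ?ltr0n // ltr_nat.
have ev2 : \forall n \near \oo, lam (s n) = L.
  case: ev1 => N _ HN.
  apply: filterS (nbhs_infty_ger (N%:R / delta)) => n hn.
  have hN : (N <= look_len delta n)%N.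
    rewrite /look_len truncn_ge_nat; last by rewrite mulr_ge0 ?ler0n ?(ltW hdelta).
    by move: hn; rewrite ler_pdivrMr // mulrC.
  apply/eqP; apply: contraT => ne.
  have := HN _ hN (s n) ne; have := hs n j0.
  by move=> a b; rewrite ltnNge a in b.
apply/cvgrPdist_lt => e e0.
set c : R := (idx_width m)%:R.
have c0 : 0 <= c by rewrite ler0n.
have e20 : 0 < e / 2 by rewrite divr_gt0.
have Eall := filter_forall _ (fun i => E i _ e20).
near=> n.
have hsn : lam (s n) = L by near: n; exact: ev2.
have hgn : forall i, `|lam i - g i n| < e / 2 by near: n; exact: Eall.
have n0 : (0 < n)%N by near: n; exact: nbhs_infty_gt.
have hcn : c / n%:R < e / 2.
  rewrite ltr_pdivrMr ?ltr0n //.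
  have : (c + 1) * 2 / e <= n%:R by near: n; exact: nbhs_infty_ger.
  rewrite ler_pdivrMr // => h; nra.
have hc' : 0 <= c / n%:R by rewrite divr_ge0 ?ler0n.
rewrite /Phi1 size_cat /bits size_mkseq natrD mulrDl -hsn.
move: (hgn (s n)); rewrite /g -/c !ltr_norml => /andP[h1 h2].
apply/andP; split; lra.
Unshelve. all: by end_near.
Qed.
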